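(* Consider the sequentially observed MDP described in the context. Define functions on nonnegative vectors $\mathbf{x}\in\mathbb{R}^n_{\ge 0}$ by $J_N(\mathbf{x})=\mathbf{x}^T\mathbf{r}_N$ and, for $t=N-1,\dots,1$, $$J_t(\mathbf{x})=\max_{P_1(t),\dots,P_n(t)\in\mathcal{C}}\Big\{\mathbf{x}^T\mathbf{r}_t+J_{t+1}(M_t\mathbf{x})\Big\}.$$ Define vectors $V^*_t\in\mathbb{R}^n$ recursively by $V^*_N=\mathbf{r}_N$ and, for $t=N-1,\dots,1$ and $i=1,\dots,n$, $$V^*_t(i)=\max_{P_i(t)\in\mathcal{C}}\Big\{r_t(i)+M^{Ti}_tV^*_{t+1}\Big\}.$$ Then for every $t=1,\dots,N$ and every $\mathbf{x}\in\mathbb{R}^n_{\ge 0}$, $J_t(\mathbf{x})=\mathbf{x}^TV^*_t$.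
   Context: States $S=\{1,\dots,n\}$; at every state the available actions are $a_1,\dots,a_m$ (in this fixed order); decision epochs $t=1,\dots,N-1$ with $N\ge 2$. For each epoch $t$, state $i$, action index $k$, let $G_i(j,k,t)\ge 0$ with $\sum_{j}G_i(j,k,t)=1$ be the probability that taking action $a_k$ in state $i$ leads to state $j$. Rewards $r_t(i,a_k)\in\mathbb{R}$ for $t\le N-1$ and terminal rewards $r_N(i)\in\mathbb{R}$; $\mathbf{r}_N$ is the vector with entries $r_N(i)$. Model: at each epoch the agent in state $i$ observes, in phase $k=1,\dots,m-1$, the realized transition of action $a_k$ and accepts it (taking $a_k$) or rejects it and moves to phase $k+1$; if all $a_1,\dots,a_{m-1}$ are rejected, $a_m$ is taken. The decision variables at epoch $t$ are matrices $P_i(t)\in[0,1]^{n\times m}$, $i=1,\dots,n$, whose entry $P_i(j,k,t)$ is the probability of accepting an observed transition to state $j$ when in state $i$, phase $k$, epoch $t$, with the convention $P_i(j,m,t)=1$ for all $j$; $\mathcal{C}$ denotes the set of all such matrices. Dropping the index $t$: $q_i(a_k)=\sum_{j}G_i(j,k)P_i(j,k)$ (so $q_i(a_m)=1$); $p_i(a_k)=\big(\prod_{l=1}^{k-1}(1-q_i(a_l))\big)q_i(a_k)$ (empty product equal to $1$); $r_t(i)=\sum_{k=1}^m p_i(a_k)r_t(i,a_k)$, and $\mathbf{r}_t$ is the vector with entries $r_t(i)$; $M_t$ is the $n\times n$ matrix with entries $M_t(j,i)=\sum_{k=1}^m\big(\prod_{l=1}^{k-1}(1-q_i(a_l))\big)G_i(j,k)P_i(j,k)$.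 Thus $r_t(i)$ and the $i$-th column of $M_t$ depend only on $P_i(t)$; $M^{Ti}_t$ denotes the transpose of the $i$-th column of $M_t$. The state distribution evolves as $\mathbf{x}_{t+1}=M_t\mathbf{x}_t$. *)

(* Defs.v *)
From HB Require Import structures.
From mathcomp Require Import all_boot all_order all_algebra.
From mathcomp Require Import classical_sets reals.
Set Implicit Arguments. Unset Strict Implicit. Unset Printing Implicit Defensive.
Import Order.TTheory GRing.Theory Num.Theory.
Local Open Scope ring_scope.
Local Open Scope classical_set_scope.

Section SOMDP.
Variables (R : realType) (n m : nat).

(* Transition kernel: G t i j k = G_i(j,k,t) : prob. that action a_k in state i
   at epoch t leads to state j.  States 'I_n, actions 'I_m (a_1..a_m ~ 0..m-1). *)
Definition kernel := nat -> 'I_n -> 'I_n -> 'I_m -> R.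

Definition inC (P : 'M[R]_(n, m)) : Prop :=
  (forall j k, 0 <= P j k <= 1) /\
  (forall j (k : 'I_m), val k = m.-1 -> P j k = 1).

Definition qv (G : kernel) t (i : 'I_n) (P : 'M[R]_(n, m)) (k : 'I_m) : R :=
  \sum_(j < n) G t i j k * P j k.

Definition notyet (G : kernel) t i P (k : 'I_m) : R :=
  \prod_(l < m | (val l < val k)%N) (1 - qv G t i P l).

Definition pv (G : kernel) t i P (k : 'I_m) : R := notyet G t i P k * qv G t i P k.

Definition rew (G : kernel) (r : nat -> 'I_n -> 'I_m -> R) t i P : R :=
  \sum_(k < m) pv G t i P k * r t i k.

(* M_t(j,i), depending only on P_i(t) *)
Definition Mcol (G : kernel) t i P (j : 'I_n) : R :=
  \sum_(k < m) notyet G t i P k * G t i j k * P j k.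

Definition Mapply (G : kernel) t (Ps : 'I_n -> 'M[R]_(n, m)) (x : 'I_n -> R)
  : 'I_n -> R := fun j => \sum_(i < n) Mcol G t i (Ps i) j * x i.

Definition dotv (x y : 'I_n -> R) : R := \sum_(i < n) x i * y i.

(* J indexed by distance d = N - t from the horizon *)
Fixpoint Jd (G : kernel) r (rN : 'I_n -> R) (N : nat) (d : nat)
  (x : 'I_n -> R) : R :=
  match d with
  | 0 => dotv x rN
  | d'.+1 =>
      sup [set y | exists Ps : 'I_n -> 'M[R]_(n, m),
             (forall i, inC (Ps i)) /\
             y = dotv x (fun i => rew G r (N - d'.+1)%N i (Ps i))
                 + Jd G r rN N d' (Mapply G (N - d'.+1)%N Ps x)]
  end.

Definition J G r rN N t x := Jd G r rN N (N - t) x.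

Fixpoint Vd (G : kernel) r (rN : 'I_n -> R) (N : nat) (d : nat) : 'I_n -> R :=
  match d with
  | 0 => rN
  | d'.+1 => fun i =>
      sup [set y | exists P : 'M[R]_(n, m), inC P /\
             y = rew G r (N - d'.+1)%N i P
                 + dotv (Mcol G (N - d'.+1)%N i P) (Vd G r rN N d')]
  end.

Definition Vstar G r rN N t := Vd G r rN N (N - t).

End SOMDP.

(* Main.v *)
Require Import Defs.
From HB Require Import structures.
From mathcomp Require Import all_boot all_order all_algebra.
From mathcomp Require Import classical_sets reals.
From mathcomp Require Import boolp.
Import Order.TTheory GRing.Theory Num.Theory.
Local Open Scope ring_scope.

Lemma sup_char (R : realType) (S : set R) (s : R) :
  (forall y, S y -> y <= s) ->
  (forall e, 0 < e -> exists y, S y /\ s - e < y) -> sup S = s.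
Proof.
move=> ub ap.
have [y0 [Sy0 _]] := ap 1 ltr01.
have hs : has_sup S by split; [exists y0 | exists s].
apply/le_anti/andP; split.
  by apply: ge_sup; [exists y0 | ].
rewrite leNgt; apply/negP => H.
have e0 : 0 < s - sup S by rewrite subr_gt0.
have [y [Sy Hy]] := ap (s - sup S) e0.
have := sup_upper_bound hs Sy.
by rewrite leNgt; move: Hy; rewrite opprB addrCA subrr addr0 => ->.
Qed.

Section Bounds.
Variables (R : realType) (n m : nat) (G : kernel R n m) (t : nat).
Hypothesis hG0 : forall i j k, 0 <= G t i j k.
Hypothesis hG1 : forall i k, \sum_(j < n) G t i j k = 1.

Lemma G_le1 i j k : G t i j k <= 1.
Proof.
rewrite -(hG1 i k) (bigD1 j) //=; apply: ler_wpDr => //.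
by apply: sumr_ge0 => l _.
Qed.

Lemma qv_ge0 i P k : inC P -> 0 <= qv G t i P k.
Proof.
move=> [hP _]; apply: sumr_ge0 => j _; apply: mulr_ge0 => //.
by case/andP: (hP j k).
Qed.

Lemma qv_le1 i P k : inC P -> qv G t i P k <= 1.
Proof.
move=> [hP _]; rewrite -(hG1 i k); apply: ler_sum => j _.
case/andP: (hP j k) => h0 h1; exact: ler_piMr.
Qed.

Lemma notyet_ge0 i P k : inC P -> 0 <= notyet G t i P k.
Proof.
move=> hP; apply: prodr_ge0 => l _; rewrite subr_ge0; exact: qv_le1.
Qed.

Lemma notyet_le1 i P k : inC P -> notyet G t i P k <= 1.
Proof.
move=> hP; apply: prodr_ile1 => l _; rewrite subr_ge0 qv_le1 //=.
by rewrite lerBlDr lerDl qv_ge0.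
Qed.

Lemma Mcol_ge0 i P j : inC P -> 0 <= Mcol G t i P j.
Proof.
move=> hP; apply: sumr_ge0 => k _; apply: mulr_ge0; last first.
  by case: hP => hP _; case/andP: (hP j k).
by apply: mulr_ge0; [exact: notyet_ge0|].
Qed.

Lemma Mcol_le i P j : inC P -> Mcol G t i P j <= m%:R.
Proof.
move=> hP; rewrite -[m in m%:R]card_ord -sumr_const.
apply: ler_sum => k _.
have /andP [h0 h1] : 0 <= P j k <= 1 by case: hP => hP _; exact: hP.
apply: mulr_ile1 => //.
- by apply: mulr_ge0; [exact: notyet_ge0|].
- apply: mulr_ile1 => //; [exact: notyet_ge0|exact: notyet_le1|exact: G_le1].
Qed.

Lemma rew_le (r : nat -> 'I_n -> 'I_m -> R) i P :
  inC P -> rew G r t i P <= \sum_(k < m) `|r t i k|.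
Proof.
move=> hP; apply: ler_sum => k _.
have p0 : 0 <= pv G t i P k.
  by apply: mulr_ge0; [exact: notyet_ge0|exact: qv_ge0].
have p1 : pv G t i P k <= 1.
  by apply: mulr_ile1; [exact: notyet_ge0|exact: qv_ge0|exact: notyet_le1|exact: qv_le1].
apply: (le_trans (ler_norm _)); rewrite normrM (ger0_norm p0).
exact: ler_piMl.
Qed.

Lemma dot_le i P (V : 'I_n -> R) :
  inC P -> dotv (Mcol G t i P) V <= \sum_(j < n) m%:R * `|V j|.
Proof.
move=> hP; apply: ler_sum => j _.
apply: (le_trans (ler_norm _)); rewrite normrM ger0_norm; last exact: Mcol_ge0.
by apply: ler_wpM2r => //; exact: Mcol_le.
Qed.

End Bounds.

Lemma decomp (R : realType) (n m : nat) (G : kernel R n m) r t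
  (Ps : 'I_n -> 'M[R]_(n, m)) (x V : 'I_n -> R) :
  dotv x (fun i => rew G r t i (Ps i)) + dotv (Mapply G t Ps x) V =
  \sum_(i < n) x i * (rew G r t i (Ps i) + dotv (Mcol G t i (Ps i)) V).
Proof.
rewrite /dotv /Mapply.
under [RHS]eq_bigr do rewrite mulrDr.
rewrite big_split /=; congr (_ + _).
under eq_bigr do rewrite mulr_suml.
rewrite exchange_big /=; apply: eq_bigr => i _.
rewrite mulr_sumr; apply: eq_bigr => j _.
by rewrite mulrAC mulrC.
Qed.

Theorem proposition1 (R : realType) (n m N : nat)
  (G : kernel R n m) (r : nat -> 'I_n -> 'I_m -> R) (rN : 'I_n -> R) :
  (0 < m)%N -> (2 <= N)%N ->
  (forall t i j k, (1 <= t <= N.-1)%N -> 0 <= G t i j k) ->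
  (forall t i k, (1 <= t <= N.-1)%N -> \sum_(j < n) G t i j k = 1) ->
  forall t : nat, (1 <= t <= N)%N ->
  forall x : 'I_n -> R, (forall i, 0 <= x i) ->
  J G r rN N t x = dotv x (Vstar G r rN N t).
Proof.
move=> _ HN HG0 HG1.
have key : forall d, (d <= N.-1)%N -> forall x : 'I_n -> R, (forall i, 0 <= x i) ->
    Jd G r rN N d x = dotv x (Vd G r rN N d).
  elim=> [|d IH] Hd x hx; first by [].
  have hd : (d <= N.-1)%N by apply: leq_trans Hd.
  set t' := (N - d.+1)%N.
  have ht : (1 <= t' <= N.-1)%N.
    rewrite /t'; apply/andP; split.
      by rewrite subn_gt0; apply: (leq_ltn_trans Hd); rewrite ltn_predL; apply: leq_trans HN.
    by rewrite -subn1 leq_sub2l.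
  have hG0 := fun i j k => HG0 t' i j k ht.
  have hG1 := fun i k => HG1 t' i k ht.
  pose f i P := rew G r t' i P + dotv (Mcol G t' i P) (Vd G r rN N d).
  have hsup : forall i, has_sup [set y | exists P, inC P /\ y = f i P].
    move=> i; split.
      have hC : inC (const_mx 1 : 'M[R]_(n, m)).
        by split=> j k; rewrite mxE // ler01 lexx.
      by exists (f i (const_mx 1)), (const_mx 1).
    exists (\sum_(k < m) `|r t' i k| + \sum_(j < n) m%:R * `|Vd G r rN N d j|).
    move=> y [P [hP ->]]; apply: lerD; [exact: rew_le | exact: dot_le].
  have Mx0 : forall Ps, (forall i, inC (Ps i)) -> forall j, 0 <= Mapply G t' Ps x j.
    move=> Ps hPs j; apply: sumr_ge0 => i _; apply: mulr_ge0 => //.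
    exact: Mcol_ge0.
  rewrite /=; apply: sup_char.
    move=> y [Ps [hPs ->]]; rewrite IH //; last exact: Mx0.
    rewrite (@decomp _ _ _ G r _ Ps x) /dotv.
    apply: ler_sum => i _; apply: ler_wpM2l => //.
    apply: (sup_upper_bound (hsup i)); by exists (Ps i).
  move=> e e0.
  pose X := \sum_(i < n) x i.
  have X0 : 0 <= X by apply: sumr_ge0.
  have X1 : 0 < X + 1 by apply: ltr_wpDl.
  pose delta := e / (X + 1).
  have dl0 : 0 < delta by apply: divr_gt0.
  have H : forall i, exists P, inC P /\ Vd G r rN N d.+1 i - delta < f i P.
    move=> i; have [y [P [hP ->]] hy] := sup_adherent dl0 (hsup i).
    by exists P.
  pose Ps i := proj1_sig (cid (H i)).
  have hPs : forall i, inC (Ps i) by move=> i; rewrite /Ps; case: cid => P [].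
  have hPf : forall i, Vd G r rN N d.+1 i - delta < f i (Ps i).
    by move=> i; rewrite /Ps; case: cid => P [].
  exists (dotv x (fun i => rew G r t' i (Ps i)) + Jd G r rN N d (Mapply G t' Ps x)).
  split; first by exists Ps.
  rewrite IH //; last exact: Mx0.
    rewrite (@decomp _ _ _ G r _ Ps x).
  apply: (@lt_le_trans _ _ (\sum_(i < n) x i * (Vd G r rN N d.+1 i - delta))).
    rewrite /dotv.
    under [Z in _ < Z]eq_bigr do rewrite mulrBr.
    rewrite sumrB -mulr_suml -/X ltrD2l ltrN2.
    rewrite mulrC (@lt_le_trans _ _ (delta * (X + 1))) //.
      by rewrite ltr_pM2l // ltrDl ltr01.
    by rewrite /delta divfK // gt_eqF.
  apply: ler_sum => i _; apply: ler_wpM2l => //; exact: ltW.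
move=> t /andP [t1 tN] x hx; rewrite /J /Vstar; apply: key => //.
by rewrite -subn1 leq_sub2l.
Qed.
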